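(* Let $\alpha\in(0,1)$, $k\ge1$ an integer, and $c=-\frac12\log\alpha$. Suppose $z_i\sim\mathcal N(\mu_i,2\mu_i)$ for $i=1,2,\dots$ with $0\le\mu_i\le\frac{-k\log\alpha}{2(k+i)}$ (where $\mathcal N(0,0)$ is the point mass at $0$). Then $$\mathbb E\,\#\{i\ge1:|z_i|>c\}\ \le\ C_3(\alpha)\,k,\qquad C_3(\alpha)=\int_0^\infty\Big[\Phi\Big(\tfrac{-(2+t)\sqrt c}{\sqrt{2+2t}}\Big)+1-\Phi\Big(\tfrac{t\sqrt c}{\sqrt{2+2t}}\Big)\Big]dt<\infty,$$ where $\Phi$ is the standard normal distribution function. *)

(* Defs.v *)
From HB Require Import structures.
From mathcomp Require Import all_boot all_order all_algebra.
From mathcomp Require Import all_classical all_reals all_analysis.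
Set Implicit Arguments. Unset Strict Implicit. Unset Printing Implicit Defensive.
Import Order.TTheory GRing.Theory Num.Theory.
Import numFieldNormedType.Exports.
Local Open Scope classical_set_scope.
Local Open Scope ring_scope.

(* N(m, v): normal law with mean m and variance v >= 0, where N(m,0) is the
   point mass at m (the library's normal_prob uses the standard deviation,
   and gives a different convention for s = 0, hence this wrapper). *)
Definition gauss_law {R : realType} (m v : R) : set R -> \bar R :=
  if v == 0 then (fun A => (\1_A m)%:E) else normal_prob m (Num.sqrt v).

Definition Phi {R : realType} (x : R) : R :=
  fine (normal_prob 0 1 `]-oo, x]%classic).

Definition C3 {R : realType} (alpha : R) : \bar R :=
  let c := - (1/2) * ln alpha in
  (\int[lebesgue_measure]_(t in `[0%R, +oo[%classic)
     (Phi (- (2 + t) * Num.sqrt c / Num.sqrt (2 + 2 * t))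
      + 1 - Phi (t * Num.sqrt c / Num.sqrt (2 + 2 * t)))%R%:E)%E.

(* Main.v *)
Require Import Defs.
From HB Require Import structures.
From mathcomp Require Import all_boot all_order all_algebra.
From mathcomp Require Import all_classical all_reals all_analysis.
From mathcomp Require Import ring lra measurable_realfun.
Import Order.TTheory GRing.Theory Num.Theory.
Import numFieldNormedType.Exports.
Local Open Scope classical_set_scope.
Local Open Scope ring_scope.

Section S_h.
Context {R : realType}.

Lemma pdf_scale (m s y : R) : 0 < s ->
  normal_pdf m s y = normal_pdf 0 1 ((y - m) / s) / s.
Proof.
move=> s0.
rewrite !normal_pdfE ?gt_eqF// /normal_peak /normal_fun.
rewrite expr1n mul1r subr0 -!mulrnAr sqrtrM ?sqr_ge0// sqrtr_sqr gtr0_norm//.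
have -> : - ((y - m) / s) ^+ 2 / (1 *+ 2) = - (y - m) ^+ 2 / (s * (s *+ 2)).
  by field; rewrite gt_eqF.
field; apply/andP; split; rewrite gt_eqF// sqrtr_gt0 pmulrn_lgt0// pi_gt0 //.

Qed.
End S_h.

Section S_h2.
Context {R : realType}.
Notation mu := (@lebesgue_measure R).

Lemma cdf_scale (m s x : R) : 0 < s ->
  normal_prob m s `]-oo, x] = normal_prob 0 1 `]-oo, (x - m) / s].
Proof.
move=> s0.
pose F (y : R) := (y - m) / s.
have F'E : F^`()%classic = cst s^-1.
  apply/funext => y; rewrite /F derive1E deriveM// deriveD// derive_cst scaler0.
  by rewrite add0r derive_id derive_cst addr0 scaler1.
rewrite /normal_prob (_ : (x - m) / s = F x)//.
rewrite (@increasing_ge0_integration_by_substitutionNy _ F (normal_pdf 0 1) x).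
- apply: eq_integral => y _; rewrite F'E /= (pdf_scale m s y s0).
  by [].
- move=> a b _ _ ab; rewrite /F ltr_pM2r ?invr_gt0// ltrBlDr subrK//.
- by rewrite F'E => ? _; exact: cst_continuous.
- by rewrite F'E; exact: is_cvg_cst.
- by rewrite F'E; exact: cvg_cst.
- split.
    by move=> y _; rewrite /F; apply: derivableM => //; apply: derivableD.
  apply: cvg_at_left_filter; rewrite /F.
  apply: cvgM; last exact: cvg_cst.
  apply: cvgB; [exact: cvg_id | exact: cvg_cst].
- rewrite /F; apply: gt0_cvgMlNy; first by rewrite invr_gt0.
  exact: cvg_addrr_Ny.
- apply: continuous_subspaceT => y; apply: continuous_normal_pdf.
  exact: oner_neq0.
- by move=> y _; exact: normal_pdf_ge0.
Qed.
End S_h2.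

Section S_h3.
Context {R : realType}.
Notation mu := (@lebesgue_measure R).
Notation N := (normal_prob (0:R) 1).

Lemma N_fin (A : set R) : measurable A -> N A = (fine (N A))%:E.
Proof.
move=> mA; rewrite fineK// ge0_fin_numE//.
apply: (le_lt_trans (probability_le1 (normal_prob 0 1) mA)); by rewrite ltey.
Qed.

Lemma PhiE (x : R) : N `]-oo, x] = (Phi x)%:E.
Proof. by rewrite /Phi -N_fin. Qed.

Lemma Phi_ge0 (x : R) : 0 <= Phi x.
Proof. by rewrite -lee_fin -PhiE. Qed.

Lemma Phi_le1 (x : R) : Phi x <= 1.
Proof. by rewrite -lee_fin -PhiE probability_le1. Qed.

Lemma PhiC (x : R) : N `]x, +oo[ = (1 - Phi x)%:E.
Proof.
transitivity (1 - N `]-oo, x])%E; first by rewrite -setCitvl probability_setC.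
by rewrite PhiE.
Qed.

Lemma Phi_le (x y : R) : x <= y -> Phi x <= Phi y.
Proof.
move=> xy; rewrite -lee_fin -!PhiE; apply: le_measure; rewrite ?inE//.
by apply: subitvP; rewrite subitvE /= bnd_simp.
Qed.

Definition Kc : R := normal_peak 1 / normal_peak (Num.sqrt 2).

Lemma Kc_gt0 : 0 < Kc.
Proof.
rewrite /Kc divr_gt0// normal_peak_gt0// ?oner_neq0// gt_eqF// sqrtr_gt0//.
Qed.

Lemma N_tail (A : set R) (r : R) : measurable A ->
  (forall y, A y -> r ^+ 2 <= y ^+ 2) ->
  (N A <= (Kc * expR (- r ^+ 2 / 4))%:E)%E.
Proof.
move=> mA Ar.
have s2 : Num.sqrt (2:R) != 0 by rewrite gt_eqF// sqrtr_gt0.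
rewrite /normal_prob.
apply: (@le_trans _ _ (\int[mu]_(y in A) (Kc * expR (- r ^+ 2 / 4) *
   normal_pdf 0 (Num.sqrt 2) y)%:E)%E).
  apply: ge0_le_integral => //.
  - by move=> y _; rewrite lee_fin normal_pdf_ge0.
  - apply/measurable_EFinP; apply: measurable_funTS; exact: measurable_normal_pdf.
  - apply/measurable_EFinP; apply: measurable_funTS; apply: measurable_funM => //.
    exact: measurable_normal_pdf.
  move=> y Ay; rewrite lee_fin !normal_pdfE ?oner_neq0//.
  rewrite /Kc /normal_fun !subr0 sqr_sqrtr// expr1n.
  have pg : normal_peak (Num.sqrt (2:R)) != 0 by rewrite gt_eqF// normal_peak_gt0.
  have -> : (2:R) *+ 2 = 4 by rewrite -[4]/(2 + 2)%:R natrD.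
  rewrite [X in _ <= X](_ : _ = normal_peak 1 * (expR (- r ^+ 2 / 4) * expR (- y ^+ 2 / 4))); last by field.
  have -> : - y ^+ 2 / 2 = - y ^+ 2 / 4 + - y ^+ 2 / 4 :> R by field.
  rewrite expRD; apply: ler_wpM2l; first exact: normal_peak_ge0.
  apply: ler_wpM2r; first exact: expR_ge0.
  rewrite ler_expR; have := Ar _ Ay; lra.
under eq_integral do rewrite EFinM.
rewrite ge0_integralZl_EFin//.
- rewrite -[X in (_ <= X)%E]mule1; apply: lee_wpmul2l.
    by rewrite lee_fin mulr_ge0// ?expR_ge0// ltW// Kc_gt0.
  exact: (probability_le1 (normal_prob 0 (Num.sqrt 2)) mA).
- by move=> y _; rewrite lee_fin normal_pdf_ge0.
- apply: measurable_funTS; apply/measurable_EFinP; exact: measurable_normal_pdf.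
- by rewrite mulr_ge0// ?expR_ge0// ltW// Kc_gt0.
Qed.
End S_h3.

Section S_h4.
Context {R : realType}.
Notation mu := (@lebesgue_measure R).
Notation N := (normal_prob (0:R) 1).

Lemma Phi_upper (x : R) : 0 <= x -> 1 - Phi x <= Kc * expR (- x ^+ 2 / 4).
Proof.
move=> x0; rewrite -lee_fin -PhiC; apply: N_tail => // y /=.
rewrite in_itv/= andbT => xy; rewrite ler_sqr ?nnegrE//; [exact: ltW|].
by apply: (le_trans x0); exact: ltW.
Qed.

Lemma Phi_lower (a : R) : a <= 0 -> Phi a <= Kc * expR (- a ^+ 2 / 4).
Proof.
move=> a0; rewrite -lee_fin -PhiE; apply: N_tail => // y /=.
rewrite in_itv/= => ya; rewrite -sqrrN -(sqrrN y) ler_sqr ?nnegrE ?oppr_ge0//.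
  by rewrite lerN2.
exact: (le_trans ya).
Qed.

Lemma gauss_tail (m s c : R) : 0 < s -> 0 < c ->
  (normal_prob m s [set x : R | (c < `|x|)%R] <=
    (Phi ((- c - m) / s) + (1 - Phi ((c - m) / s)))%:E)%E.
Proof.
move=> s0 c0.
have -> : [set x : R | (c < `|x|)%R] = `]-oo, - c[ `|` `]c, +oo[.
  apply/seteqP; split => x /=; rewrite !in_itv/= ?andbT ltr_normr.
    by case/orP => h; [right|left; rewrite ltrNr].
  by case => h; apply/orP; [right; rewrite ltrNr|left].
rewrite measureU//=; last first.
  apply/seteqP; split => x //= []; rewrite !in_itv/= ?andbT => h1 h2.
  have : - c < c by lra.
  lra.
rewrite EFinD; apply: leeD.
- apply: (@le_trans _ _ (normal_prob m s `]-oo, - c])).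
    apply: le_measure; rewrite ?inE//.
    by apply: subitvP; rewrite subitvE /= bnd_simp.
  by rewrite cdf_scale// PhiE.
- have -> : normal_prob m s `]c, +oo[ = (1 - normal_prob m s `]-oo, c])%E.
    by rewrite -setCitvl probability_setC.
  by rewrite cdf_scale// PhiE.
Qed.
End S_h4.

Section S_h5.
Context {R : realType}.

Lemma sq_le (X Y : R) : 0 <= X -> 0 <= Y -> X ^+ 2 <= Y ^+ 2 -> X <= Y.
Proof. by move=> X0 Y0; rewrite ler_sqr ?nnegrE. Qed.

Lemma alg_ineq (c m t : R) : 0 < c -> 0 < m -> 0 <= t -> m * (1 + t) <= c ->
  Phi ((- c - m) / Num.sqrt (2 * m)) + (1 - Phi ((c - m) / Num.sqrt (2 * m)))
  <= Phi (- (2 + t) * Num.sqrt c / Num.sqrt (2 + 2 * t)) + 1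
     - Phi (t * Num.sqrt c / Num.sqrt (2 + 2 * t)).
Proof.
move=> c0 m0 t0 mc.
set A := Num.sqrt (2 + 2 * t); set B := Num.sqrt c; set S := Num.sqrt (2 * m).
have A0 : 0 < A by rewrite sqrtr_gt0; lra.
have B0 : 0 < B by rewrite sqrtr_gt0.
have S0 : 0 < S by rewrite sqrtr_gt0; lra.
have A2 : A ^+ 2 = 2 + 2 * t by rewrite sqr_sqrtr //; lra.
have B2 : B ^+ 2 = c by rewrite sqr_sqrtr //; lra.
have S2 : S ^+ 2 = 2 * m by rewrite sqr_sqrtr //; lra.
have key : 0 <= (c - m * (1 + t)) * (c - m + t * c).
  apply: mulr_ge0; first lra.
  have : 0 <= t * c by apply: mulr_ge0 => //; lra.
  have : m <= c by nra.
  lra.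
have h1 : t * B * S <= (c - m) * A.
  apply: sq_le.
  - apply: mulr_ge0; [apply: mulr_ge0|]; lra.
  - apply: mulr_ge0; last lra; nra.
  rewrite !exprMn A2 B2 S2; nra.
have h2 : (2 + t) * B * S <= (c + m) * A.
  apply: sq_le.
  - apply: mulr_ge0; [apply: mulr_ge0|]; lra.
  - apply: mulr_ge0; lra.
  rewrite !exprMn A2 B2 S2; nra.
have e1 : t * B / A <= (c - m) / S.
  rewrite -subr_ge0.
  have -> : (c - m) / S - t * B / A = ((c - m) * A - t * B * S) / (S * A).
    by field; apply/andP; split; rewrite gt_eqF.
  apply: divr_ge0; [lra | apply: mulr_ge0; lra].
have e2 : (- c - m) / S <= - (2 + t) * B / A.
  rewrite -subr_ge0.
  have -> : - (2 + t) * B / A - (- c - m) / S = ((c + m) * A - (2 + t) * B * S) / (S * A).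
    by field; apply/andP; split; rewrite gt_eqF.
  apply: divr_ge0; [lra | apply: mulr_ge0; lra].
have := Phi_le _ _ e1; have := Phi_le _ _ e2; lra.
Qed.
End S_h5.

Section S_h6.
Context {R : realType}.
Notation mu := (@lebesgue_measure R).

Definition aa (c t : R) := - (2 + t) * Num.sqrt c / Num.sqrt (2 + 2 * t).
Definition bb (c t : R) := t * Num.sqrt c / Num.sqrt (2 + 2 * t).
Definition fC (c t : R) := Phi (aa c t) + 1 - Phi (bb c t).
Definition mx (t : R) := if t < 0 then 0 else t.

Lemma mx_ge0 t : 0 <= mx t.
Proof. rewrite /mx; case: ifP => // /negbT; rewrite -leNgt. done. Qed.

Lemma mx_le t u : t <= u -> mx t <= mx u.
Proof. rewrite /mx; case: ifP; case: ifP => //; lra. Qed.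

Lemma mxE t : 0 <= t -> mx t = t.
Proof. by rewrite /mx; case: ifP => //; lra. Qed.

Lemma ab_mono (c t u : R) : 0 < c -> 0 <= t -> t <= u ->
  aa c u <= aa c t /\ bb c t <= bb c u.
Proof.
move=> c0 t0 tu.
set At := Num.sqrt (2 + 2 * t); set Au := Num.sqrt (2 + 2 * u).
set B := Num.sqrt c.
have At0 : 0 < At by rewrite sqrtr_gt0; lra.
have Au0 : 0 < Au by rewrite sqrtr_gt0; lra.
have B0 : 0 < B by rewrite sqrtr_gt0.
have At2 : At ^+ 2 = 2 + 2 * t by rewrite sqr_sqrtr //; lra.
have Au2 : Au ^+ 2 = 2 + 2 * u by rewrite sqr_sqrtr //; lra.
have k1 : 0 <= (u - t) * (u + t + u * t).
  apply: mulr_ge0; first lra.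
  have : 0 <= u * t by apply: mulr_ge0; lra.
  lra.
have h1 : t * Au <= u * At.
  apply: sq_le; [apply: mulr_ge0; lra | apply: mulr_ge0; lra |].
  rewrite !exprMn At2 Au2; nra.
have h2 : (2 + t) * Au <= (2 + u) * At.
  apply: sq_le; [apply: mulr_ge0; lra | apply: mulr_ge0; lra |].
  rewrite !exprMn At2 Au2; nra.
split; rewrite /aa /bb -/At -/Au -/B -subr_ge0.
- have -> : - (2 + t) * B / At - - (2 + u) * B / Au =
     B * ((2 + u) * At - (2 + t) * Au) / (At * Au).
    by field; apply/andP; split; rewrite gt_eqF.
  apply: divr_ge0; [apply: mulr_ge0; lra | apply: mulr_ge0; lra].
- have -> : u * B / Au - t * B / At = B * (u * At - t * Au) / (At * Au).
    by field; apply/andP; split; rewrite gt_eqF.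
  apply: divr_ge0; [apply: mulr_ge0; lra | apply: mulr_ge0; lra].
Qed.

Lemma fC_ge0 c t : 0 <= fC c t.
Proof. rewrite /fC; have := Phi_ge0 (aa c t); have := Phi_le1 (bb c t); lra. Qed.

Lemma fC_meas (c : R) : 0 < c ->
  measurable_fun (`[0%R, +oo[%classic : set R) (fun t => (fC c t)%:E).
Proof.
move=> c0; apply/measurable_EFinP.
apply: (@eq_measurable_fun _ _ _ _ _ (fun t => fC c (mx t))).
  by move=> t; rewrite inE /= in_itv/= andbT => t0; rewrite mxE.
rewrite /fC; apply: measurable_funB; first apply: measurable_funD => //.
- apply: nonincreasing_measurable => // x y xy.
  apply: Phi_le; have := @ab_mono c (mx x) (mx y) c0 (mx_ge0 x) (mx_le _ _ xy); case; done.
- apply: nondecreasing_measurable => // x y xy.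
  apply: Phi_le; have := @ab_mono c (mx x) (mx y) c0 (mx_ge0 x) (mx_le _ _ xy); case; done.
Qed.
End S_h6.

Section S_h7.
Context {R : realType}.
Notation mu := (@lebesgue_measure R).

Lemma fC_bound (c t : R) : 0 < c -> 0 <= t ->
  fC c t <= 2 * Kc * expR (c / 8 - c / 8 * t).
Proof.
move=> c0 t0.
have A0 : 0 < Num.sqrt (2 + 2 * t) by rewrite sqrtr_gt0; lra.
have B0 : 0 < Num.sqrt c by rewrite sqrtr_gt0.
have b0 : 0 <= bb c t by rewrite /bb; apply: divr_ge0; [apply: mulr_ge0|]; lra.
have ab : - aa c t - bb c t = 2 * Num.sqrt c / Num.sqrt (2 + 2 * t).
  by rewrite /aa /bb; field; rewrite gt_eqF.
have ab2 : 0 <= 2 * Num.sqrt c / Num.sqrt (2 + 2 * t).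
  by apply: divr_ge0; [apply: mulr_ge0|]; lra.
have a0 : aa c t <= 0 by lra.
have sq : bb c t ^+ 2 <= aa c t ^+ 2.
  by rewrite -(sqrrN (aa c t)) ler_sqr ?nnegrE; lra.
have bsq : bb c t ^+ 2 = c * (t - 1) / 2 + c / (2 + 2 * t).
  rewrite /bb expr_div_n exprMn !sqr_sqrtr; try lra.
  by field; rewrite gt_eqF //; lra.
have bsq2 : 0 <= c / (2 + 2 * t) by apply: divr_ge0; lra.
have e1 : expR (- aa c t ^+ 2 / 4) <= expR (- bb c t ^+ 2 / 4).
  by rewrite ler_expR; lra.
have e2 : expR (- bb c t ^+ 2 / 4) <= expR (c / 8 - c / 8 * t).
  by rewrite ler_expR bsq; lra.
have := Phi_lower _ a0; have := Phi_upper _ b0.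
have := Kc_gt0 (R:=R).
rewrite /fC => K0 h1 h2.
have := ler_wpM2l (ltW K0) e1; have := ler_wpM2l (ltW K0) e2.
lra.
Qed.

Lemma C3_fin (alpha : R) : 0 < alpha < 1 -> (C3 alpha < +oo)%E.
Proof.
move=> a01.
set c := - (1/2) * ln alpha.
have c0 : 0 < c by have := ln_lt0 a01; rewrite /c; lra.
have -> : C3 alpha = (\int[mu]_(t in `[0%R, +oo[) (fC c t)%:E)%E by [].
set l := c / 8.
have l0 : 0 < l by rewrite /l; lra.
set M := 2 * Kc * expR l / l.
have M0 : 0 <= M.
  by rewrite /M; apply: divr_ge0; [apply: mulr_ge0; [have := Kc_gt0 (R:=R); lra|exact: expR_ge0]|lra].
apply: (@le_lt_trans _ _ (\int[mu]_(t in `[0%R, +oo[) (M * exponential_pdf l t)%:E)%E).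
  apply: ge0_le_integral => //.
  - by move=> t _; rewrite lee_fin fC_ge0.
  - exact: fC_meas.
  - apply/measurable_EFinP; apply: measurable_funM => //.
    apply: measurable_funTS; exact: measurable_exponential_pdf.
  - move=> t; rewrite /= in_itv/= andbT => t0.
    rewrite lee_fin exponential_pdfE//; have h := @fC_bound c t c0 t0; apply: (le_trans h).
    rewrite /M /l -/l.
    have -> : c / 8 - c / 8 * t = l + - l * t by rewrite /l; lra.
    rewrite expRD [X in _ <= X](_ : _ = 2 * Kc * (expR l * expR (- l * t)))//.
    by field; rewrite gt_eqF.
have -> : (\int[mu]_(t in `[0%R, +oo[) (M * exponential_pdf l t)%:E =
    \int[mu]_(t in `[0%R, +oo[) (M%:E * (exponential_pdf l t)%:E))%E.
  by apply: eq_integral => t _; rewrite EFinM.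
rewrite ge0_integralZl_EFin//; last 2 first.
- by move=> t _; rewrite lee_fin exponential_pdf_ge0//; lra.
- apply/measurable_EFinP; apply: measurable_funTS; exact: measurable_exponential_pdf.
apply: (@le_lt_trans _ _ (M%:E * 1)%E); last by rewrite mule1 ltry.
apply: lee_wpmul2l; first by rewrite lee_fin.
rewrite -(integral_exponential_pdf l0).
apply: ge0_subset_integral => //.
- apply/measurable_EFinP; exact: measurable_exponential_pdf.
- by move=> t _; rewrite lee_fin exponential_pdf_ge0//; lra.
Qed.
End S_h7.

Lemma A_eq {R : realType} (c : R) :
  [set x : R | (c < `|x|)%R] = `]-oo, - c[ `|` `]c, +oo[.
Proof.
apply/seteqP; split => x /=; rewrite !in_itv/= ?andbT ltr_normr.
  by case/orP => h; [right|left; rewrite ltrNr].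
by case => h; apply/orP; [right; rewrite ltrNr|left].
Qed.

Theorem lemma1 (R : realType) (d : measure_display) (T : measurableType d)
  (P : probability T R) (alpha : R) (k : nat) (mu : nat -> R)
  (z : nat -> T -> R) :
  0 < alpha < 1 -> (1 <= k)%N ->
  (forall i, (1 <= i)%N ->
     0 <= mu i <= (- (k%:R * ln alpha)) / (2 * (k + i)%:R)) ->
  (forall i, (1 <= i)%N -> measurable_fun setT (z i)) ->
  (forall i, (1 <= i)%N -> forall A : set R, measurable A ->
     P (z i @^-1` A) = gauss_law (mu i) (2 * mu i) A) ->
  let c := - (1/2) * ln alpha in
  (C3 alpha < +oo)%E /\
  (\int[P]_w (\sum_(1 <= i <oo) ((c < `|z i w|)%R%:R)%:E)
     <= C3 alpha * (k%:R)%:E)%E.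
Proof.
move=> a01 k1 hmu hmeas hlaw c.
have c0 : 0 < c by have := ln_lt0 a01; rewrite /c; lra.
split; first exact: C3_fin.
set A := [set x : R | (c < `|x|)%R].
have mA : measurable A by rewrite /A A_eq; apply: measurableU.
have mzA i : (1 <= i)%N -> measurable (z i @^-1` A).
  by move=> i1; rewrite -[X in measurable X]setTI; apply: hmeas.
have indE i w : ((c < `|z i w|)%R%:R : R) = \1_(z i @^-1` A) w.
  rewrite indicE; case: (boolP (w \in _)) => h.
    by move/set_mem: h => /= ->.
  by have /negP := h; rewrite /A /preimage /=; case: ltrP => // h2 /(_ (mem_set h2)).
have E1 : (\int[P]_w (\sum_(1 <= i <oo) ((c < `|z i w|)%R%:R)%:E) =
    \sum_(n <oo) P (z n.+1 @^-1` A))%E.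
  transitivity (\int[P]_w (\big[+%E/0%E]_(0 <= n <oo) ((c < `|z (n + 1)%N w|)%R%:R)%:E))%E.
    apply: eq_integral => w _; apply/esym.
    have := (@nneseries_addn R (fun i => ((c < `|z i w|)%R%:R)%:E) 1); apply.
    move=> i; rewrite -[0%R]/(0%:E)%E lee_fin; exact: ler0n.
  rewrite (@integral_nneseries _ _ _ P setT measurableT); last 2 first.
  - move=> n; apply/measurable_EFinP.
    rewrite (_ : (fun x => _) = \1_(z (n + 1)%N @^-1` A)); last first.
      by apply/funext => w; rewrite indE.
    by apply: measurable_indic; apply: mzA; rewrite addn1.
  - by move=> n w _; rewrite -[0%R]/(0%:E)%E lee_fin.
  apply: eq_eseriesr => n _.
  under eq_integral do rewrite indE.
  by rewrite integral_indic ?setIT ?addn1//; apply: mzA.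
rewrite E1.
set K : R := k%:R.
have K0 : 0 < K by rewrite /K ltr0n.
have term n t : 0 <= t -> t * K <= n.+1%:R ->
    (P (z n.+1 @^-1` A) <= (fC c t)%:E)%E.
  move=> t0 tK; rewrite hlaw // -/A.
  have /andP[m0 mb] := hmu n.+1 isT.
  case: (eqVneq (mu n.+1) 0) => [mz|mnz].
    rewrite /gauss_law mz mulr0 eqxx indicE.
    rewrite (_ : (0:R) \in A = false); first by rewrite lee_fin fC_ge0.
    by apply/negbTE/negP => /set_mem; rewrite /A /= normr0; lra.
  have mpos : 0 < mu n.+1 by rewrite lt_neqAle eq_sym mnz m0.
  rewrite /gauss_law ifF; last by apply: gt_eqF; lra.
  apply: (le_trans (gauss_tail _ _ _ _ c0)); first by rewrite sqrtr_gt0; lra.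
  rewrite lee_fin; apply: alg_ineq => //.
  have lnE : ln alpha = - 2 * c by rewrite /c; lra.
  have J0 : 0 < n.+1%:R :> R by rewrite ltr0n.
  move: mb; rewrite natrD -/K ler_pdivlMr; last by lra.
  rewrite lnE => mb.
  have h1 : 0 <= K * (c - mu n.+1 * (1 + t)) by nra.
  by rewrite pmulr_rge0 in h1; lra.
pose S n : set R := `[n%:R / K, n.+1%:R / K[%classic.
have mS n : measurable (S n) by exact: measurable_itv.
have S0 n : S n `<=` `[0%R, +oo[%classic.
  move=> t; rewrite /S /= !in_itv/= andbT => /andP[h _].
  apply: le_trans h; apply: divr_ge0 => //; lra.
have f0 : forall t, `[0%R, +oo[%classic t -> (0 <= (fC c t)%:E)%E.
  by move=> t _; rewrite lee_fin fC_ge0.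
apply: (@le_trans _ _ (\sum_(n <oo) (K%:E * \int[lebesgue_measure]_(t in S n) (fC c t)%:E))%E).
  apply: lee_nneseries => [n _ _|n _]; first exact: measure_ge0.
  set g := P (z n.+1 @^-1` A).
  have : (\int[lebesgue_measure]_(t in S n) (cst g) t <=
          \int[lebesgue_measure]_(t in S n) (fC c t)%:E)%E.
    apply: ge0_le_integral.
    - exact: mS.
    - by move=> t _ /=; exact: measure_ge0.
    - by [].
    - exact: (measurable_funS _ (S0 n) (fC_meas c c0)).
    - move=> t; rewrite /S /= in_itv/= => /andP[h1 h2]; apply: term.
        apply: le_trans h1; apply: divr_ge0 => //; lra.
      by rewrite -ler_pdivlMr// ltW.
  have LS : lebesgue_measure (S n) = (K^-1)%:E.
    rewrite /S lebesgue_measure_itv /= ifT; last first.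
      by rewrite lte_fin ltr_pM2r ?invr_gt0// ltr_nat.
    rewrite -EFinB -addn1 natrD; congr EFin; field; lra.
  rewrite integral_cst //; last exact: mS.
  rewrite [X in (g * X <= _)%E -> _](_ : _ = (K^-1)%:E); last exact: LS.
  move=> h; rewrite -(@lee_pmul2l _ (K^-1)%:E); last 2 first.
  - by [].
  - by rewrite lte_fin invr_gt0.
  by rewrite muleA -EFinM mulVf ?gt_eqF// mul1e muleC.
rewrite nneseriesZl; last first.
  move=> n _; apply: integral_ge0 => t St; rewrite lee_fin; exact: fC_ge0.
rewrite [X in (_ <= X)%E]muleC; apply: lee_wpmul2l; first by rewrite lee_fin ltW.
have -> : C3 alpha = (\int[lebesgue_measure]_(t in `[0%R, +oo[) (fC c t)%:E)%E by [].
have tS : trivIset setT S.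
  move=> i j _ _ [t]; rewrite /S /= !in_itv/= => -[/andP[a1 a2] /andP[b1 b2]].
  apply/eqP; rewrite eqn_leq; apply/andP; split; rewrite leqNgt; apply/negP => ij.
  - have : (j.+1%:R / K <= i%:R / K) by rewrite ler_pM2r ?invr_gt0// ler_nat.
    lra.
  - have : (i.+1%:R / K <= j%:R / K) by rewrite ler_pM2r ?invr_gt0// ler_nat.
    lra.
rewrite -ge0_integral_bigcup //; last 2 first.
- apply: (measurable_funS _ _ (fC_meas c c0)) => //.
  by move=> t [n _ /S0].
- by move=> t _; rewrite lee_fin fC_ge0.
apply: ge0_subset_integral => //.
- by apply: bigcup_measurable => j _; exact: mS.
- exact: fC_meas.
- by move=> t [n _ /S0].
Qed.
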